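(* Let $\mathfrak{g}$ be a direct product of finitely many Lie algebras of the form $\operatorname{Lie}(\operatorname{Isom}M)$ with $M = S^k$, $\mathbb{E}^k$, or $\mathbb{H}^k$ (the $k$ and the type of $M$ may vary between factors). Then $\mathfrak{g}$ contains no nonabelian nilpotent subalgebra.
   Context: $\operatorname{Lie}(\operatorname{Isom}M)$ is the Lie algebra of the isometry group of $M$: $\mathfrak{so}_{k+1}$ for $S^k$, $\mathbb{R}^k\rtimes\mathfrak{so}_k$ for $\mathbb{E}^k$, and $\mathfrak{so}_{1,k}$ for $\mathbb{H}^k$. *)

(* Defs.v *)
From HB Require Import structures.
From mathcomp Require Import all_boot all_order all_algebra.
From mathcomp Require Import reals.
Set Implicit Arguments. Unset Strict Implicit. Unset Printing Implicit Defensive.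
Import Order.TTheory GRing.Theory Num.Theory.
Local Open Scope ring_scope.

Inductive geom := Sph | Euc | Hyp.

Definition minkJ (R : realType) (k : nat) : 'M[R]_k.+1 :=
  \matrix_(i, j) (if i == j then (if i == ord0 then -1 else 1) else 0).

(* Lie(Isom M) as a Lie subalgebra of gl_(k+1)(R):
   - S^k : so_(k+1)      = skew-symmetric (k+1)x(k+1) matrices;
   - H^k : so_(1,k)      = { A | A^T J + J A = 0 }, J = diag(-1,1,..,1);
   - E^k : R^k x| so_k   = affine matrices [[0, 0], [v, B]] with B skew
             (acting on (1, x) as x |-> v + B x). *)
Definition in_isom_lie (R : realType) (t : geom) (k : nat) (A : 'M[R]_k.+1) : Prop :=
  match t with
  | Sph => A^T = - A
  | Hyp => A^T *m minkJ R k + minkJ R k *m A = 0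
  | Euc => exists (B : 'M[R]_k) (v : 'cV[R]_k),
             B^T = - B /\ A = block_mx (0 : 'M[R]_(1,1)) (0 : 'M[R]_(1,k)) v B
  end.

Section ProductLie.
Variables (R : realType) (m : nat) (t : 'I_m -> geom) (k : 'I_m -> nat).

Definition pelt := forall i : 'I_m, 'M[R]_((k i).+1).

Definition in_g (x : pelt) : Prop := forall i, in_isom_lie (t i) (x i).

Definition pzero : pelt := fun i => 0.
Definition padd (x y : pelt) : pelt := fun i => x i + y i.
Definition pscale (a : R) (x : pelt) : pelt := fun i => a *: x i.
Definition pbr (x y : pelt) : pelt := fun i => x i *m y i - y i *m x i.
Definition is_pzero (x : pelt) : Prop := forall i, x i = 0.

Definition is_subalgebra (S : pelt -> Prop) : Prop :=
  [/\ forall x, S x -> in_g x,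
      S pzero,
      forall x y, S x -> S y -> S (padd x y),
      forall a x, S x -> S (pscale a x) &
      forall x y, S x -> S y -> S (pbr x y)].

Inductive span (A : pelt -> Prop) : pelt -> Prop :=
  | span_gen x : A x -> span A x
  | span_zero : span A pzero
  | span_add x y : span A x -> span A y -> span A (padd x y)
  | span_scale a x : span A x -> span A (pscale a x).

Fixpoint lcs (S : pelt -> Prop) (n : nat) : pelt -> Prop :=
  match n with
  | O => S
  | n'.+1 => span (fun z => exists x y, S x /\ lcs S n' y /\ z = pbr x y)
  end.

Definition nilpotent (S : pelt -> Prop) : Prop :=
  exists n, forall x, lcs S n x -> is_pzero x.

Definition abelian (S : pelt -> Prop) : Prop :=
  forall x y, S x -> S y -> is_pzero (pbr x y).

End ProductLie.

(* Main.v *)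
Require Import Defs.
From HB Require Import structures.
From mathcomp Require Import all_boot all_order all_algebra.
From mathcomp Require Import reals.
From mathcomp Require Import ring lra.
Import Order.TTheory GRing.Theory Num.Theory.

Module Aux.
Set Implicit Arguments. Unset Strict Implicit. Unset Printing Implicit Defensive.
Local Open Scope ring_scope.

Section S.
Variable R : realType.

Lemma frobE n (X : 'M[R]_n) : \tr (X^T *m X) = \sum_i \sum_j X j i ^+ 2.
Proof. rewrite /mxtrace; apply: eq_bigr => i _; rewrite mxE; apply: eq_bigr => j _.
by rewrite mxE expr2. Qed.

Lemma frob_ge0 n (X : 'M[R]_n) : 0 <= \tr (X^T *m X).
Proof. rewrite frobE; apply: sumr_ge0 => i _; apply: sumr_ge0 => j _; exact: sqr_ge0. Qed.

Lemma frob_eq0 n (X : 'M[R]_n) : \tr (X^T *m X) = 0 -> X = 0.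
Proof.
rewrite frobE => /eqP; rewrite psumr_eq0 => [/allP H|i _]; last first.
  by apply: sumr_ge0 => j _; exact: sqr_ge0.
apply/matrixP => j i; rewrite mxE.
have := H i (mem_index_enum i); rewrite psumr_eq0 => [/allP H2|l _]; last exact: sqr_ge0.
by have := H2 j (mem_index_enum j); rewrite sqrf_eq0 => /eqP.
Qed.
Lemma tr_comm n (M A B : 'M[R]_n) : M *m A = A *m M -> \tr (M *m (A *m B - B *m A)) = 0.
Proof.
move=> hM; rewrite mulmxBr linearB /= mulmxA hM -mulmxA.
by rewrite (mulmxA M B A) (mxtrace_mulC (M *m B) A) subrr.
Qed.

Lemma heis_skew n (A B : 'M[R]_n) : A^T = -A -> B^T = -B ->
  A *m (A *m B - B *m A) = (A *m B - B *m A) *m A -> A *m B - B *m A = 0.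
Proof.
move=> hA hB hC; set C := A *m B - B *m A.
have hCt : C^T = - C.
  by rewrite /C linearB /= !trmx_mul hA hB !mulNmx !mulmxN !opprK opprB.
apply: frob_eq0; rewrite hCt mulNmx linearN /= {2}/C tr_comm ?oppr0 //.
Qed.
Section Delta.
Variables (n : nat) (i0 : 'I_n).
Notation E := (delta_mx i0 i0 : 'M[R]_n).

Lemma EmulE (M : 'M[R]_n) i j : (E *m M) i j = (i == i0)%:R * M i0 j.
Proof.
rewrite mxE (bigD1 i0) //= big1 => [|l hl]; first by rewrite mxE eqxx andbT addr0.
by rewrite mxE (negbTE hl) andbF mul0r.
Qed.

Lemma mulEE (M : 'M[R]_n) i j : (M *m E) i j = M i i0 * (j == i0)%:R.
Proof.
rewrite mxE (bigD1 i0) //= big1 => [|l hl]; first by rewrite mxE eqxx addr0.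
by rewrite mxE (negbTE hl) mulr0.
Qed.

Lemma EME (M : 'M[R]_n) : E *m M *m E = M i0 i0 *: E.
Proof.
apply/matrixP => i j; rewrite mulEE EmulE !mxE.
by case: (i == i0); case: (j == i0); rewrite /= ?(mulr1, mul1r, mulr0, mul0r).
Qed.

Lemma EE : E *m E = E.
Proof.
apply/matrixP => i j; rewrite EmulE !mxE eqxx /=.
by case: (i == i0); rewrite /= ?(mul1r, mul0r).
Qed.

Lemma trE (M : 'M[R]_n) : \tr (E *m M) = M i0 i0.
Proof.
rewrite /mxtrace (bigD1 i0) //= big1 => [|l hl]; first by rewrite EmulE eqxx mul1r addr0.
by rewrite EmulE (negbTE hl) mul0r.
Qed.

Lemma trEt : E^T = E.
Proof. exact: trmx_delta. Qed.
End Delta.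
Lemma heis_euc n (i0 : 'I_n) (A1 A2 : 'M[R]_n) :
  let E := delta_mx i0 i0 : 'M[R]_n in let P := 1%:M - E in
  E *m A1 = 0 -> E *m A2 = 0 ->
  (A1 *m P)^T = -(A1 *m P) -> (A2 *m P)^T = -(A2 *m P) ->
  A1 *m (A1 *m A2 - A2 *m A1) = (A1 *m A2 - A2 *m A1) *m A1 ->
  A2 *m (A1 *m A2 - A2 *m A1) = (A1 *m A2 - A2 *m A1) *m A2 ->
  A1 *m A2 - A2 *m A1 = 0.
Proof.
move=> E P h1 h2 s1 s2 c1 c2; set C := A1 *m A2 - A2 *m A1 in c1 c2 *.
have hEC : E *m C = 0 by rewrite /C mulmxBr !mulmxA h1 h2 !mul0mx subrr.
have PA1 : P *m A1 = A1 by rewrite /P mulmxBl mul1mx h1 subr0.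
have PA2 : P *m A2 = A2 by rewrite /P mulmxBl mul1mx h2 subr0.
have PC : P *m C = C by rewrite /P mulmxBl mul1mx hEC subr0.
have KC : C *m P = (A1 *m P) *m (A2 *m P) - (A2 *m P) *m (A1 *m P).
  by rewrite /C mulmxBl !mulmxA -!(mulmxA _ P) PA1 PA2.
have hcomm : (A1 *m P) *m (C *m P) = (C *m P) *m (A1 *m P).
  by rewrite !mulmxA -(mulmxA A1 P C) PC c1 -(mulmxA C P A1) PA1.
have CP0 : C *m P = 0.
  by rewrite KC; apply: heis_skew => //; rewrite -KC.
have CE : C = C *m E.
  by apply/eqP; rewrite -subr_eq0 -{1}(mulmx1 C) -mulmxBr CP0.
have A1C : A1 *m C = 0 by rewrite c1 CE -mulmxA h1 mulmx0.
have A2C : A2 *m C = 0 by rewrite c2 CE -mulmxA h2 mulmx0.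
have key : forall Ai, E *m Ai = 0 -> (Ai *m P)^T = -(Ai *m P) -> Ai *m C = 0 ->
    C^T *m Ai = C^T *m Ai *m E.
  move=> Ai hi si ci.
  have KiC : (Ai *m P) *m C = 0 by rewrite -mulmxA PC.
  have : C^T *m (Ai *m P) = 0.
    by rewrite -[C^T *m _]trmxK trmx_mul trmxK si mulNmx KiC oppr0 trmx0.
  rewrite /P mulmxBr mulmx1 mulmxBr => /eqP; rewrite subr_eq0 => /eqP h.
  by rewrite {1}h mulmxA.
apply: frob_eq0; rewrite {2}/C mulmxBr linearB /=.
rewrite !mulmxA (key A1) // (key A2) // -!(mulmxA _ E) h1 h2 !mulmx0.
by rewrite linear0 subrr.
Qed.
Lemma disc (a b c : R) : (forall t, 0 <= a + 2 * b * t + c * t ^+ 2) -> b ^+ 2 <= a * c.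
Proof.
move=> H; have a0 : 0 <= a by have := H 0; rewrite !mulr0 expr0n /= mulr0 !addr0.
have [c0|c0] := ltP 0 c.
  have := H (- b / c); set t := - b / c => Ht.
  have ht : c * t = - b by rewrite /t mulrCA divff ?mulr1 // gt_eqF.
  have h := mulr_ge0 (ltW c0) Ht.
  have e : c * (a + 2 * b * t + c * t ^+ 2) = a * c - b ^+ 2.
    clearbody t; have hb : b = - (c * t) by rewrite ht opprK.
    by rewrite hb; ring.
  by rewrite e subr_ge0 in h.
have {c0} c0 : c = 0.
  apply/eqP; rewrite eq_le c0 /=; rewrite leNgt; apply/negP => cn.
  pose t := (a + 1) / (- c) + 1.
  have ht1 : (a + 1) / (- c) * (- c) = a + 1 by rewrite divfK // oppr_eq0 lt_eqF.
  have hq : 0 <= (a + 1) / (- c) by apply: divr_ge0; [nra|nra].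
  have := H t; have := H (- t).
  rewrite /t; clearbody t; set q := (a + 1) / (- c) in ht1 hq *; nra.
rewrite c0.
have [b0|b0] := eqVneq b 0; first by rewrite b0 expr0n /= mulr0.
have := H (- (a + 1) / (2 * b)); set t := - (a + 1) / (2 * b) => Ht.
have ht : 2 * b * t = - (a + 1) by rewrite /t mulrCA divff ?mulr1 // mulf_neq0 ?pnatr_eq0.
by rewrite c0 mul0r addr0 ht in Ht; lra.
Qed.
Definition Jm n (i0 : 'I_n) : 'M[R]_n := locked (1%:M - delta_mx i0 i0 - delta_mx i0 i0).
Lemma JmE n (i0 : 'I_n) : Jm i0 = 1%:M - delta_mx i0 i0 - delta_mx i0 i0.
Proof. by rewrite /Jm -lock. Qed.

Section Hyp.
Variables (n : nat) (i0 : 'I_n).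
Notation E := (delta_mx i0 i0 : 'M[R]_n).
Notation J := (Jm i0).

Lemma E00 : E i0 i0 = 1. Proof. by rewrite mxE !eqxx. Qed.

Lemma EJ : E *m J = - E.
Proof. by rewrite JmE !mulmxBr mulmx1 EE subrr sub0r. Qed.
Lemma JE : J *m E = - E.
Proof. by rewrite JmE !mulmxBl mul1mx EE subrr sub0r. Qed.
Lemma JJ : J *m J = 1%:M.
Proof. by rewrite {1}JmE !mulmxBl mul1mx EJ !opprK JmE !subrK. Qed.
Lemma Jt : J^T = J.
Proof. by rewrite JmE !linearB /= trmx1 trEt. Qed.

Lemma entry (X : 'M[R]_n) : X i0 i0 = (E *m X *m E) i0 i0.
Proof. by rewrite EME mxE E00 mulr1. Qed.

Lemma JX00 (X : 'M[R]_n) : (J *m X) i0 i0 = - X i0 i0.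
Proof. by rewrite [LHS]entry mulmxA EJ !mulNmx mxE -entry. Qed.
Lemma XJ00 (X : 'M[R]_n) : (X *m J) i0 i0 = - X i0 i0.
Proof. by rewrite [LHS]entry -!mulmxA JE !mulmxN mxE mulmxA -entry. Qed.
Lemma XEY00 (X Y : 'M[R]_n) : (X *m E *m Y) i0 i0 = X i0 i0 * Y i0 i0.
Proof.
rewrite mxE (bigD1 i0) //= big1 => [|l hl]; first by rewrite mulEE eqxx mulr1 addr0.
by rewrite mulEE (negbTE hl) mulr0 mul0r.
Qed.
Lemma trEXE (X : 'M[R]_n) : \tr (E *m X *m E) = X i0 i0.
Proof. by rewrite mxtrace_mulC mulmxA EE trE. Qed.

Lemma Jskew_t (M : 'M[R]_n) : M^T *m J + J *m M = 0 -> M^T = -(J *m M *m J).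
Proof.
move=> /eqP; rewrite addr_eq0 => /eqP h.
by rewrite -[M^T]mulmx1 -{1}JJ mulmxA h mulNmx.
Qed.

Lemma Jskew_diag (M : 'M[R]_n) : M^T = -(J *m M *m J) -> M i0 i0 = 0.
Proof.
move=> h; have : M^T i0 i0 = M i0 i0 by rewrite mxE.
rewrite h mxE XJ00 JX00 opprK => e; lra.
Qed.

Lemma bil00 (X Y : 'M[R]_n) : (X *m J *m Y) i0 i0 = (X *m Y) i0 i0 - 2 * (X i0 i0 * Y i0 i0).
Proof.
by rewrite -XEY00 JmE !mulmxBr mulmx1 !mulmxBl !mxE mulr2n mulrDl mul1r opprD addrA.
Qed.

Lemma vecform (N : 'M[R]_n) : N^T = -(J *m N *m J) ->
  \tr ((N *m E)^T *m (N *m E)) = (N *m N) i0 i0.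
Proof.
move=> h; have h0 := Jskew_diag h.
rewrite trmx_mul trEt mulmxA -(mulmxA E) trEXE h mulNmx mxE.
by rewrite -(mulmxA J) -mulmxA JX00 opprK bil00 h0 mul0r mulr0 subr0.
Qed.
Lemma Jconj (X Y : 'M[R]_n) : (J *m X *m J) *m (J *m Y *m J) = J *m (X *m Y) *m J.
Proof. by rewrite !mulmxA -(mulmxA _ J J) JJ mulmx1 -!mulmxA. Qed.

Lemma jskew_cube (X : 'M[R]_n) : X^T = -(J *m X *m J) ->
  (X *m X *m X)^T = -(J *m (X *m X *m X) *m J).
Proof.
move=> hX; rewrite !trmx_mul hX !mulNmx !mulmxN !opprK.
by rewrite Jconj (Jconj X (X *m X)) (mulmxA X X X).
Qed.

Lemma Jsq_entry (X : 'M[R]_n) : (J *m X *m J) i0 i0 = X i0 i0.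
Proof. by rewrite XJ00 JX00 opprK. Qed.

Lemma colsq_ge0 (V : 'M[R]_n) : 0 <= (V^T *m V) i0 i0.
Proof. rewrite mxE; apply: sumr_ge0 => l _; rewrite mxE -expr2; exact: sqr_ge0. Qed.

Lemma entryD (A B : 'M[R]_n) i j : (A + B) i j = A i j + B i j. Proof. by rewrite mxE. Qed.
Lemma entryB (A B : 'M[R]_n) i j : (A - B) i j = A i j - B i j. Proof. by rewrite !mxE. Qed.
Lemma entryN (A : 'M[R]_n) i j : (- A) i j = - A i j. Proof. by rewrite mxE. Qed.
Lemma entry0 i j : (0 : 'M[R]_n) i j = 0. Proof. by rewrite mxE. Qed.
Lemma entryZ a (A : 'M[R]_n) i j : (a *: A) i j = a * A i j. Proof. by rewrite mxE. Qed.

Lemma trD (A B : 'M[R]_n) : (A + B)^T = A^T + B^T.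
Proof. by apply/matrixP => i j; rewrite !mxE. Qed.
Lemma trB (A B : 'M[R]_n) : (A - B)^T = A^T - B^T.
Proof. by apply/matrixP => i j; rewrite !mxE. Qed.
Lemma trN (A : 'M[R]_n) : (- A)^T = - A^T.
Proof. by apply/matrixP => i j; rewrite !mxE. Qed.
Lemma trZ a (A : 'M[R]_n) : (a *: A)^T = a *: A^T.
Proof. by apply/matrixP => i j; rewrite !mxE. Qed.

Definition F (X Y : 'M[R]_n) := (X^T *m J *m Y) i0 i0.

Lemma FC X Y : F X Y = F Y X.
Proof.
have e (M : 'M[R]_n) : M i0 i0 = M^T i0 i0 by rewrite mxE.
by rewrite /F [RHS]e !trmx_mul trmxK Jt mulmxA.
Qed.

Lemma FDl X1 X2 Y : F (X1 + X2) Y = F X1 Y + F X2 Y.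
Proof.
have h (A1 A2 M Z : 'M[R]_n) : (A1 + A2) *m M *m Z = A1 *m M *m Z + A2 *m M *m Z.
  by rewrite !mulmxDl.
by rewrite /F trD h entryD.
Qed.
Lemma FZl a X Y : F (a *: X) Y = a * F X Y.
Proof. by rewrite /F trZ -!scalemxAl entryZ. Qed.
Lemma FDr X Y1 Y2 : F X (Y1 + Y2) = F X Y1 + F X Y2.
Proof. by rewrite FC FDl !(FC _ X). Qed.
Lemma FZr a X Y : F X (a *: Y) = a * F X Y.
Proof. by rewrite FC FZl FC. Qed.
Lemma EXE (Z : 'M[R]_n) : E *m (Z *m E) = Z i0 i0 *: E.
Proof. by rewrite mulmxA EME. Qed.
Lemma EXYE (Z Y : 'M[R]_n) : E *m (Z *m (Y *m E)) = (Z *m Y) i0 i0 *: E.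
Proof. by rewrite (mulmxA Z) EXE. Qed.
Lemma EXEr (Z X : 'M[R]_n) : E *m (Z *m (E *m X)) = Z i0 i0 *: (E *m X).
Proof. by rewrite !mulmxA EME -scalemxAl. Qed.
Lemma EXYEr (Z Y X : 'M[R]_n) : E *m (Z *m (Y *m (E *m X))) = (Z *m Y) i0 i0 *: (E *m X).
Proof. by rewrite (mulmxA Z) EXEr. Qed.

Lemma kill (W M : 'M[R]_n) : W^T = J *m W *m J -> M^T = -(J *m M *m J) ->
  M *m W = W *m M -> W i0 i0 *: W = W *m E *m W -> W i0 i0 != 0 ->
  M *m W *m E = 0.
Proof.
move=> hWt hMt hMW hG w0; set w1 := W i0 i0 in hG w0 *.
have h1 : M *m (W *m E *m W) = (W *m E *m W) *m M.
  by rewrite -hG -scalemxAr -scalemxAl hMW.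
have ha : w1 *: (M *m (W *m E)) = (W *m M) i0 i0 *: (W *m E).
  have := congr1 (mulmx^~ E) h1 => /=.
  rewrite -!mulmxA EXE EXYE -/w1 -!scalemxAr => ->.
  done.
have hb : (M *m W) i0 i0 *: (E *m W) = w1 *: (E *m (W *m M)).
  have := congr1 (mulmx E) h1 => /=.
  by rewrite -!mulmxA EXYEr EXEr.
have tEW : (E *m W)^T = -(J *m (W *m E)).
  by rewrite trmx_mul trEt hWt -(mulmxA (J *m W) J E) JE mulmxN mulmxA.
have tEWM : (E *m (W *m M))^T = J *m (M *m W) *m E.
  by rewrite trmx_mul trEt trmx_mul hMt hWt !mulNmx Jconj -(mulmxA (J *m (M *m W)) J E) JE mulmxN opprK.
have hc : - ((M *m W) i0 i0 *: (W *m E)) = w1 *: (M *m (W *m E)).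
  have := congr1 (fun X => J *m X^T) hb => /=.
  by rewrite !trZ tEW tEWM -!scalemxAr mulmxN !mulmxA JJ !mul1mx scalerN.
rewrite -hMW in ha.
have : w1 *: (M *m (W *m E)) = 0.
  set X := w1 *: (M *m (W *m E)) in ha hc *.
  clearbody X; apply/matrixP => i j.
  have e1 := congr1 (fun Z : 'M[R]_n => Z i j) ha.
  have e2 := congr1 (fun Z : 'M[R]_n => Z i j) hc.
  move: e1 e2 => /= e1 e2; rewrite entryN in e2; rewrite mxE; lra.
rewrite mulmxA => /eqP; rewrite scaler_eq0 (negbTE w0) /= => /eqP //.
Qed.
Lemma F_ge0 (V : 'M[R]_n) : V i0 i0 = 0 -> 0 <= F V V.
Proof. by move=> h; rewrite /F bil00 h !mulr0 subr0; exact: colsq_ge0. Qed.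

Lemma psd (W V : 'M[R]_n) : W i0 i0 != 0 -> F W W = 0 -> F V W = 0 -> 0 <= F V V.
Proof.
move=> w0 hWW hVW; set a := V i0 i0 / W i0 i0.
have h0 : (V + (- a) *: W) i0 i0 = 0.
  by rewrite entryD entryZ /a mulNr divfK // subrr.
have := F_ge0 h0.
by rewrite !FDl !FDr !FZl !FZr hWW hVW (FC W V) hVW !mulr0 !addr0.
Qed.
Lemma trXEY (X Y : 'M[R]_n) : \tr (X *m E *m Y) = (Y *m X) i0 i0.
Proof. by rewrite mxtrace_mulC mulmxA -trE mxtrace_mulC. Qed.

Lemma heis_hyp (A B : 'M[R]_n) :
  A^T *m J + J *m A = 0 -> B^T *m J + J *m B = 0 ->
  A *m (A *m B - B *m A) = (A *m B - B *m A) *m A ->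
  B *m (A *m B - B *m A) = (A *m B - B *m A) *m B ->
  A *m B - B *m A = 0.
Proof.
move=> hA hB c1 c2.
have tA := Jskew_t hA; have tB := Jskew_t hB.
have tC : (A *m B - B *m A)^T = -(J *m (A *m B - B *m A) *m J).
  rewrite trB !trmx_mul tA tB !mulNmx !mulmxN !opprK (Jconj B A) (Jconj A B).
  by rewrite mulmxBr mulmxBl opprB.
set C := A *m B - B *m A in c1 c2 tC *.
have defC : C = A *m B - B *m A by [].
clearbody C.
have AtJ : A^T *m J = -(J *m A) by move/eqP: hA; rewrite addr_eq0 => /eqP.
have BtJ : B^T *m J = -(J *m B) by move/eqP: hB; rewrite addr_eq0 => /eqP.
have CtJ : C^T *m J = -(J *m C) by rewrite tC mulNmx -(mulmxA (J *m C) J J) JJ mulmx1.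
have trW : \tr (C *m C) = 0 by rewrite {2}defC; apply: tr_comm; rewrite c1.
have cpow : forall X, X *m A = A *m X -> (X *m C) *m A = A *m (X *m C).
  by move=> X hX; rewrite -mulmxA -c1 mulmxA hX mulmxA.
have c3 : C *m C *m C *m A = A *m (C *m C *m C) by apply: (cpow); apply: (cpow); rewrite c1.
have trWW : \tr (C *m C *m (C *m C)) = 0.
  have -> : C *m C *m (C *m C) = (C *m C *m C) *m (A *m B - B *m A) by rewrite defC !mulmxA.
  exact: tr_comm.
have tW : (C *m C)^T = J *m (C *m C) *m J by rewrite trmx_mul tC mulNmx mulmxN opprK Jconj.
have tC3 := jskew_cube tC.
set W := C *m C in trW trWW tW *.
have defW : W = C *m C by [].
set C3 := C *m C *m C in c3 tC3 *.
have defC3 : C3 = C *m C *m C by [].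
clearbody W C3.
set w1 := W i0 i0; set w2 := (W *m W) i0 i0; set w3 := (W *m W *m W) i0 i0.
have hw1 : 0 <= w1 by rewrite /w1 defW -(vecform tC); exact: frob_ge0.
have CS : forall t, 0 <= w1 + 2 * w2 * t + w3 * t ^+ 2.
  move=> t; set N := C + t *: C3.
  have tN : N^T = -(J *m N *m J).
    rewrite /N trD trZ tC tC3 mulmxDr mulmxDl -scalemxAr -scalemxAl.
    by rewrite scalerN opprD.
  have := frob_ge0 (N *m E); rewrite (vecform tN) /N mulmxDl !mulmxDr.
  rewrite -!scalemxAl -!scalemxAr scalerA !entryD !entryZ.
  have -> : C *m C = W by [].
  have -> : C *m C3 = W *m W by rewrite defC3 defW !mulmxA.
  have -> : C3 *m C = W *m W by rewrite defC3 defW !mulmxA.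
  have -> : C3 *m C3 = W *m W *m W by rewrite defC3 defW !mulmxA.
  rewrite -/w1 -/w2 -/w3 => h.
  by have -> : w1 + 2 * w2 * t + w3 * t ^+ 2 = w1 + t * w2 + (t * w2 + t * t * w3) by ring.
have cs := disc CS.
set G := w1 *: W - W *m E *m W.
have EG : E *m G = 0.
  by rewrite /G mulmxBr -scalemxAr !mulmxA EME -scalemxAl subrr.
have GE : G *m E = 0.
  by rewrite /G mulmxBl -scalemxAl -!mulmxA EXE -scalemxAr subrr.
have hJG : J *m G = G by rewrite JmE !mulmxBl mul1mx EG !subr0.
have hGJ : G *m J = G by rewrite JmE !mulmxBr mulmx1 GE !subr0.
have JEJ : J *m E *m J = E by rewrite JE mulNmx EJ opprK.
have Gt : G^T = G.
  rewrite -{2}hJG -{2}hGJ /G trB trZ !trmx_mul tW trEt mulmxBl mulmxBr.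
  rewrite -scalemxAl -scalemxAr; congr (_ - _); first by rewrite mulmxA.
  have JEJr X : J *m (E *m (J *m X)) = E *m X by rewrite !mulmxA JEJ.
  by rewrite -!mulmxA JEJr.
have trGG : \tr (G *m G) = w2 ^+ 2 - 2 * w1 * w3.
  rewrite /G mulmxBl !mulmxBr -!scalemxAl -!scalemxAr scalerA !linearB /= !mxtraceZ.
  have -> : W *m (W *m E *m W) = (W *m W) *m E *m W by rewrite !mulmxA.
  have -> : W *m E *m W *m W = W *m E *m (W *m W) by rewrite !mulmxA.
  have -> : W *m E *m W *m (W *m E *m W) = (W *m E *m W *m W) *m E *m W by rewrite !mulmxA.
  rewrite trWW !trXEY.
  have -> : W *m (W *m E *m W *m W) = (W *m W) *m E *m (W *m W) by rewrite !mulmxA.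
  rewrite XEY00 -/w2 -!mulmxA (mulmxA W W W) -/w3.
  ring.
have hGG := frob_ge0 G; rewrite Gt trGG in hGG.
have w20 : w2 = 0 by apply/eqP; rewrite -sqrf_eq0 eq_le sqr_ge0 andbT; nra.
have G0 : G = 0 by apply: frob_eq0; rewrite Gt trGG w20; nra.
have hG : w1 *: W = W *m E *m W by apply/eqP; rewrite -subr_eq0 -/G G0.
have [w0|w0] := eqVneq w1 0.
  have CE0 : C *m E = 0.
    by apply: frob_eq0; rewrite (vecform tC) -defW -/w1 w0.
  have EC0 : E *m C = 0.
    apply: trmx_inj; rewrite trmx_mul trEt tC trmx0 mulNmx.
    by rewrite -(mulmxA (J *m C) J E) JE mulmxN -mulmxA CE0 mulmx0 oppr0 oppr0.
  have Csk : C^T = - C.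
    by rewrite tC JmE !mulmxBr !mulmxBl !mulmx1 !mul1mx CE0 EC0 !mul0mx !subr0.
  by apply: frob_eq0; rewrite Csk mulNmx linearN /= -defW trW oppr0.
suff hw : w1 = 0 by rewrite hw eqxx in w0.
have AW : A *m W = W *m A by rewrite defW mulmxA c1 -!mulmxA c1.
have BW : B *m W = W *m B by rewrite defW mulmxA c2 -!mulmxA c2.
have AWE := kill tW tA AW hG w0.
have BWE := kill tW tB BW hG w0.
have CWE : C *m W *m E = 0.
  by rewrite defC !mulmxBl -!mulmxA (mulmxA B W E) BWE (mulmxA A W E) AWE !mulmx0 subrr.
have FWW : F W W = 0.
  by rewrite /F tW -(mulmxA (J *m W) J J) JJ mulmx1 -mulmxA JX00 -/w2 w20 oppr0.
have e0 (X : 'M[R]_n) : (X *m E) i0 i0 = X i0 i0 by rewrite mulEE eqxx mulr1.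
have FAW : F A W = 0.
  by rewrite /F AtJ mulNmx entryN -mulmxA JX00 opprK -e0 AWE mxE.
have FCBW : F (C *m B) W = 0.
  have M1 : (C *m B)^T *m J *m W = J *m (B *m (C *m W)).
    by rewrite trmx_mul -(mulmxA B^T) CtJ mulmxN mulNmx (mulmxA B^T J C) BtJ !mulNmx opprK !mulmxA.
  by rewrite /F M1 JX00 -e0 -!mulmxA (mulmxA C W E) CWE !mulmx0 mxE oppr0.
have FCBCB : F (C *m B) (C *m B) = 0.
  have M2 : (C *m B)^T *m J *m (C *m B) = -(B^T *m J *m W *m B).
    by rewrite trmx_mul -(mulmxA B^T C^T J) CtJ mulmxN mulNmx defW !mulmxA.
  have M3 : w1 *: ((C *m B)^T *m J *m (C *m B)) = -((B^T *m J *m W) *m E *m (W *m B)).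
    by rewrite M2 scalerN scalemxAl scalemxAr hG !mulmxA.
  have := congr1 (fun X : 'M[R]_n => X i0 i0) M3.
  rewrite /= entryZ (entryN (B^T *m J *m W *m E *m (W *m B))) XEY00 -BW -(e0 (B *m W)) BWE entry0.
  rewrite mulr0 oppr0 => /eqP; rewrite mulf_eq0 (negbTE w0) /= => /eqP.
  done.
have Fpos : forall t, 0 <= F A A + 2 * F A (C *m B) * t + 0 * t ^+ 2.
  move=> t; have := @psd W (A + t *: (C *m B)) w0 FWW.
  rewrite FDl FZl FAW FCBW mulr0 addr0 => /(_ erefl).
  rewrite !FDl !FDr !FZl !FZr FCBCB (FC (C *m B) A) => h.
  by have -> : F A A + 2 * F A (C *m B) * t + 0 * t ^+ 2 =
      F A A + t * F A (C *m B) + (t * F A (C *m B) + t * (t * 0)) by ring.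
have FACB : F A (C *m B) = 0.
  by have := disc Fpos; rewrite mulr0 => h; apply/eqP; rewrite -sqrf_eq0 eq_le h sqr_ge0.
have hACB : (A *m C *m B) i0 i0 = 0.
  by rewrite -FACB /F AtJ mulNmx entryN -!mulmxA JX00 opprK mulmxA.
have hCBA : (C *m B *m A) i0 i0 = - (A *m C *m B) i0 i0.
  have e (X : 'M[R]_n) : X i0 i0 = X^T i0 i0 by rewrite mxE.
  have M : A^T *m (B^T *m C^T) = -(J *m (A *m (C *m B)) *m J).
    rewrite tA tB tC !mulNmx !mulmxN !opprK (Jconj B C) (Jconj A (B *m C)).
    by rewrite c2.
  rewrite e !trmx_mul M (entryN (J *m (A *m (C *m B)) *m J)) Jsq_entry mulmxA.
  done.
rewrite /w1 defW {2}defC mulmxBr !mulmxA -c1 entryB hCBA hACB; lra.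
Qed.
End Hyp.
Lemma E_block k : (delta_mx ord0 ord0 : 'M[R]_(1 + k)) = block_mx 1%:M 0 0 0.
Proof.
apply/matrixP => i j.
rewrite -[i](splitK) -[j](splitK).
case: (split i) => i'; case: (split j) => j';
  rewrite ?block_mxEul ?block_mxEur ?block_mxEdl ?block_mxEdr !mxE ?ord1 //=.
Qed.

Lemma euc_facts k (A : 'M[R]_(1 + k)) (B0 : 'M[R]_k) (v : 'cV[R]_k) :
  B0^T = - B0 -> A = block_mx (0 : 'M_(1,1)) (0 : 'M_(1,k)) v B0 ->
  (delta_mx (@ord0 k) (@ord0 k) : 'M[R]_(1 + k)) *m A = 0 /\
  (A *m (1%:M - (delta_mx (@ord0 k) (@ord0 k) : 'M[R]_(1 + k))))^T =
     - (A *m (1%:M - (delta_mx (@ord0 k) (@ord0 k) : 'M[R]_(1 + k)))).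
Proof.
move=> hB ->; rewrite E_block; split.
  by rewrite mulmx_block !mulmx0 !mul0mx !addr0 block_mx0.
have -> : (1%:M : 'M[R]_(1 + k)) - block_mx 1%:M 0 0 0 = block_mx 0 0 0 1%:M.
  by rewrite (scalar_mx_block 1 k 1) opp_block_mx add_block_mx !subrr !oppr0 !addr0.
rewrite mulmx_block !mul0mx !mulmx0 !addr0 !add0r mulmx1.
by rewrite tr_block_mx !trmx0 hB opp_block_mx !oppr0.
Qed.
End S.

Lemma minkJE (R : realType) k : minkJ R k = Jm R (@ord0 k).
Proof.
apply/matrixP => i j; rewrite JmE !mxE.
have [<-|hij] := eqVneq i j.
  by rewrite andbb; case: (i == ord0); rewrite /= ?subr0; lra.
have -> : ((i == ord0) && (j == ord0)) = false.
  by apply/negbTE; apply: contra hij => /andP [/eqP -> /eqP ->].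
by rewrite /= !subr0.
Qed.

Lemma heis_factor (R : realType) (g : geom) (k : nat) (A B : 'M[R]_k.+1) :
  in_isom_lie g A -> in_isom_lie g B ->
  A *m (A *m B - B *m A) - (A *m B - B *m A) *m A = 0 ->
  B *m (A *m B - B *m A) - (A *m B - B *m A) *m B = 0 ->
  A *m B - B *m A = 0.
Proof.
move=> hA hB /eqP c1 /eqP c2; rewrite subr_eq0 in c1; rewrite subr_eq0 in c2.
move/eqP: c1 => c1; move/eqP: c2 => c2.
case: g hA hB => /= [hA hB|[B1 [v1 [s1 e1]]] [B2 [v2 [s2 e2]]]|hA hB].
- exact: heis_skew hA hB c1.
- have [h1 t1] := euc_facts s1 e1; have [h2 t2] := euc_facts s2 e2.
  exact: (heis_euc h1 h2 t1 t2 c1 c2).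
- rewrite minkJE in hA hB; exact: heis_hyp hA hB c1 c2.
Qed.
End Aux.

Theorem lemma6p31 (R : realType) (m : nat) (t : 'I_m -> geom) (k : 'I_m -> nat)
  (S : pelt R k -> Prop) :
  is_subalgebra t S -> nilpotent S -> abelian S.
Proof.
move=> [Sg S0 Sadd Sscale Sbr] [N hN].
have lcs_sub : forall j z, lcs S j z -> S z.
  elim=> [//|j IH] z /=; elim=> [w [x [y [Sx [Ly ->]]]]| | x y _ Sx _ Sy | a x _ Sx].
  - exact: Sbr Sx (IH _ Ly).
  - exact: S0.
  - exact: Sadd.
  - exact: Sscale.
pose P j := forall x y, S x -> lcs S j y -> is_pzero (pbr x y).
have PN : P N.
  move=> x y _ Ly i; have := hN y Ly i; rewrite /pbr => ->.
  by rewrite mulmx0 mul0mx subrr.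
have step : forall j, P j.+1 -> P j.
  move=> j Pj x y Sx Ly i.
  have Lz : lcs S j.+1 (pbr x y) by apply: span_gen; exists x, y.
  have h1 := Pj x _ Sx Lz i; have h2 := Pj y _ (lcs_sub _ _ Ly) Lz i.
  rewrite /pbr in h1 h2 *.
  exact: (Aux.heis_factor (Sg x Sx i) (Sg y (lcs_sub _ _ Ly) i) h1 h2).
have all_d : forall d, P (N - d).
  elim=> [|d IH]; first by rewrite subn0.
  case: (ltnP d N) => hd.
    by apply: step; rewrite subnSK.
  have e1 : N - d = 0 by apply/eqP; rewrite subn_eq0.
  have e2 : N - d.+1 = 0 by apply/eqP; rewrite subn_eq0 (leq_trans hd).
  by rewrite e2 -e1.
have := all_d N; rewrite subnn => P0 x y Sx Sy; exact: P0 x y Sx Sy.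
Qed.
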